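(* Let $n$ be a positive odd integer. Then, modulo $(1-aq^n)(a-q^n)$, $$ \sum_{k=0}^{n-1}\frac{(aq;q^2)_k\,(q/a;q^2)_k}{(q^2;q^2)_k^2}\, x^k \equiv \sum_{k=0}^{(n-1)/2}{(n-1)/2\brack k}_{q^2}^2 q^{k^2-nk} (-x)^k\, (x;q^2)_{(n-1)/2-k}. $$
   Context: $a,q,x$ are indeterminates. The $q$-shifted factorial is $(y;q)_0=1$ and $(y;q)_m=(1-y)(1-yq)\cdots(1-yq^{m-1})$ for $m\geqslant1$. The $q$-binomial coefficient is ${N\brack k}_q=\frac{(q;q)_N}{(q;q)_k(q;q)_{N-k}}$ for $0\leqslant k\leqslant N$ and $0$ otherwise; ${N\brack k}_{q^2}$ is this with $q$ replaced by $q^2$. For rational functions $A,B$ and a polynomial $P$, $A\equiv B\pmod P$ means $A-B=P\cdot C/D$ for polynomials $C,D$ with $D$ coprime to $P$. *)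

(* Defs.v *)
From HB Require Import structures.
From mathcomp Require Import all_boot all_order all_algebra fraction.
Set Implicit Arguments. Unset Strict Implicit. Unset Printing Implicit Defensive.
Import Order.TTheory GRing.Theory Num.Theory.
Local Open Scope ring_scope.

(* Polynomial ring Q[a,q,x], built as nested univariate polynomials:
   Pa = Q[a], Pq = Pa[q], Px = Pq[x]. *)
Definition Pa := {poly rat}.
Definition Pq := {poly Pa}.
Definition Px := {poly Pq}.
Definition Fx := {fraction Px}.
Definition toF (p : Px) : Fx := @FracField.tofrac Px p.

Definition pa : Px := ('X : Pa)%:P%:P.
Definition pq : Px := ('X : Pq)%:P.
Definition px : Px := 'X.

Definition A : Fx := toF pa.
Definition Qv : Fx := toF pq.
Definition X : Fx := toF px.

Definition qpoch (y b : Fx) (m : nat) : Fx := \prod_(i < m) (1 - y * b ^+ i).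

Definition qbinom (b : Fx) (N k : nat) : Fx :=
  if (k <= N)%N then qpoch b b N / (qpoch b b k * qpoch b b (N - k)) else 0.

Definition pdivides (g p : Px) : Prop := exists c : Px, p = g * c.

Definition pcoprime (p d : Px) : Prop :=
  forall g : Px, pdivides g p -> pdivides g d -> g \is a GRing.unit.

Definition congr_mod (P : Px) (U V : Fx) : Prop :=
  exists C D : Px, pcoprime P D /\ (U - V) * toF D = toF P * toF C.

(* Main.v *)
Require Import Defs.
From HB Require Import structures.
From mathcomp Require Import all_boot all_order all_algebra fraction polyXY.
From mathcomp Require Import ring zify.
Import Order.TTheory GRing.Theory Num.Theory.
Local Open Scope ring_scope.
Definition emb (r : {poly rat}) : Px := (map_poly (polyC : rat -> Pa) r : Pq)%:P.

Lemma emb_rmorphM r s : emb (r * s) = emb r * emb s.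
Proof. by rewrite /emb rmorphM /= polyCM. Qed.

Lemma emb_eq0 r : (emb r == 0) = (r == 0).
Proof. by rewrite /emb polyC_eq0 map_poly_eq0. Qed.

Lemma emb_X : emb 'X = pq.
Proof. by rewrite /emb map_polyX. Qed.

Lemma size1_factor (R : idomainType) (p q : {poly R}) (c : R) :
  c != 0 -> p * q = c%:P -> p = (p`_0)%:P /\ q = (q`_0)%:P.
Proof.
move=> c0 E.
have pq0 : p * q != 0 by rewrite E polyC_eq0.
have p0 : p != 0 by apply: contraNneq pq0 => ->; rewrite mul0r.
have q0 : q != 0 by apply: contraNneq pq0 => ->; rewrite mulr0.
have := size_mul p0 q0; rewrite E size_polyC c0.
have := size_poly_gt0 p; have := size_poly_gt0 q; rewrite p0 q0 => hq hp sz.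
split; apply: size1_polyC; lia.
Qed.

Definition P0 (n : nat) : Pq := (1 - ('X : Pa)%:P * 'X ^+ n) * (('X : Pa)%:P - 'X ^+ n).

Lemma P_P0 n : (1 - pa * pq ^+ n) * (pa - pq ^+ n) = (P0 n)%:P.
Proof. by rewrite /P0 /pa /pq !(rmorphM, rmorphB, rmorph1, rmorphXn). Qed.

Lemma swapP0 n : swapXY (P0 n) =
  (- 'X^n)%:P + (1 + 'X^(2 * n))%:P * 'X + (- 'X^n)%:P * 'X^2 :> {poly {poly rat}}.
Proof.
rewrite /P0 !(rmorphM, rmorphB, rmorph1, rmorphXn) /= swapXY_polyC swapXY_X map_polyX.
rewrite !(rmorphD, rmorphN, rmorph1, rmorphXn) /= mulnC exprM.
set y := (_ ^+ n : {poly {poly rat}}). ring.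
Qed.

Lemma unit_step (n : nat) (s : {poly rat}) (g : Px) : s != 0 ->
  pdivides g (emb s) -> pdivides g ((1 - pa * pq ^+ n) * (pa - pq ^+ n)) ->
  g \is a GRing.unit.
Proof.
move=> s0 [h Hh] [c Hc].
have [Eg Eh] := @size1_factor _ g h (map_poly (polyC : rat -> Pa) s)
   ltac:(by rewrite map_poly_eq0) (esym Hh).
move: Hh Hc; rewrite Eg Eh P_P0 /emb -polyCM => /polyC_inj Hh.
set g0 := g`_0; set h0 := h`_0.
move=> Hc.
have Sw : swapXY g0 * swapXY h0 = s%:P.
  by rewrite -rmorphM /= -Hh swapXY_map_polyC.
have [Eg0 _] := size1_factor _ _ _ _ s0 Sw.
set r := (swapXY g0)`_0 in Eg0.
have c0n : (swapXY (P0 n))`_0 = - 'X^n.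
  by rewrite swapP0 !coefD !coefCM coefC coefX coefXn /= !mulr0 !addr0.
have c1n : (swapXY (P0 n))`_1 = 1 + 'X^(2 * n).
  by rewrite swapP0 !coefD !coefCM coefC coefX coefXn /= mulr1 mulr0 add0r addr0.
have P0n : P0 n != 0.
  apply/negP => /eqP E; move: c0n; rewrite E rmorph0 coef0 => /eqP.
  by rewrite eq_sym oppr_eq0 -size_poly_eq0 size_polyXn.
have [_ Ec] := size1_factor _ _ _ _ P0n (esym Hc).
move: Hc; rewrite Ec -polyCM => /polyC_inj Hc.
have Sw2 : swapXY (P0 n) = r%:P * swapXY c`_0 by rewrite Hc rmorphM /= Eg0.
have ru : r \is a GRing.unit.
  apply/unitrPr; exists ((swapXY c`_0)`_1 + 'X^n * (swapXY c`_0)`_0).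
  have := c0n; have := c1n; rewrite Sw2 !coefCM => e1 e0.
  rewrite mulrDr mulrCA e1 e0 mulrN -exprD addnn -mul2n.
  by rewrite addrK.
move/unitrPr: ru => [r' Hr'].
have Eg1 : g0 = swapXY (r%:P) by rewrite -Eg0 swapXYK.
apply/unitrPr; exists (swapXY (r'%:P))%:P.
rewrite -polyCM Eg1 -rmorphM /= -polyCM Hr'.
by rewrite rmorph1 /= rmorph1.
Qed.

Lemma emb_Xn m : emb ('X^m) = pq ^+ m.
Proof. by rewrite /emb rmorphXn /= map_polyX rmorphXn. Qed.

Lemma coprimeD n i r : r != 0 ->
  pcoprime ((1 - pa * pq ^+ n) * (pa - pq ^+ n)) (pa ^+ i * emb r).
Proof.
move=> r0 g [c1 Hc1] [c2 Hc2].
apply: (@unit_step n ('X^(n * i) * r)) => //.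
  by rewrite mulf_neq0 // -size_poly_eq0 size_polyXn.
set w := (1 + pq ^+ (2 * n)) - pq ^+ n * pa.
have Ew : pa * w - pq ^+ n = (1 - pa * pq ^+ n) * (pa - pq ^+ n).
  rewrite /w mulnC exprM; ring.
have := subrXX (pa * w) (pq ^+ n) i; rewrite Ew Hc1 => E.
exists (w ^+ i * c2 - c1 * (\sum_(j < i) (pa * w) ^+ (i.-1 - j) * (pq ^+ n) ^+ j) * emb r).
rewrite emb_rmorphM emb_Xn exprM.
have -> : (pq ^+ n) ^+ i = (pa * w) ^+ i - g * c1 * (\sum_(j < i) (pa * w) ^+ (i.-1 - j) * (pq ^+ n) ^+ j).
  by rewrite -E opprB addrC subrK.
set S := \sum_(j < i) _.
have H : (pa * w) ^+ i * emb r = g * (w ^+ i * c2).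
  by rewrite exprMn mulrAC Hc2 -mulrA (mulrC c2).
rewrite mulrBl H; ring.
by exists c1.
Qed.

Lemma toFM p q : toF (p * q) = toF p * toF q. Proof. exact: tofracM. Qed.
Lemma toFD p q : toF (p + q) = toF p + toF q. Proof. exact: tofracD. Qed.
Lemma toFB p q : toF (p - q) = toF p - toF q. Proof. exact: tofracB. Qed.
Lemma toFN p : toF (- p) = - toF p. Proof. exact: tofracN. Qed.
Lemma toF1 : toF 1 = 1. Proof. exact: tofrac1. Qed.
Lemma toFX p m : toF (p ^+ m) = toF p ^+ m. Proof. exact: tofracXn. Qed.
Lemma toF_eq0 p : (toF p == 0) = (p == 0). Proof. exact: tofrac_eq0. Qed.

Definition Dform (d : Px) := exists i r, r != 0 /\ d = pa ^+ i * emb r.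

Lemma Dform_mul d1 d2 : Dform d1 -> Dform d2 -> Dform (d1 * d2).
Proof.
move=> [i1 [r1 [r10 ->]]] [i2 [r2 [r20 ->]]].
exists (i1 + i2)%N, (r1 * r2); split; first by rewrite mulf_neq0.
by rewrite emb_rmorphM exprD; ring.
Qed.

Definition Good (y : Fx) := exists c d, Dform d /\ y * toF d = toF c.

Lemma Dform1 : Dform 1.
Proof. by exists 0%N, 1; split; [exact: oner_neq0 | rewrite /emb !rmorph1 mulr1]. Qed.

Lemma good_toF p : Good (toF p).
Proof. by exists p, 1; split; [exact: Dform1 | rewrite toF1 mulr1]. Qed.

Lemma good1 : Good 1. Proof. by rewrite -toF1; exact: good_toF. Qed.

Lemma good_add y1 y2 : Good y1 -> Good y2 -> Good (y1 + y2).
Proof.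
move=> [c1 [d1 [D1 E1]]] [c2 [d2 [D2 E2]]].
exists (c1 * d2 + c2 * d1), (d1 * d2); split; first exact: Dform_mul.
by rewrite toFD !toFM -E1 -E2; ring.
Qed.

Lemma good_mul y1 y2 : Good y1 -> Good y2 -> Good (y1 * y2).
Proof.
move=> [c1 [d1 [D1 E1]]] [c2 [d2 [D2 E2]]].
exists (c1 * c2), (d1 * d2); split; first exact: Dform_mul.
by rewrite !toFM -E1 -E2; ring.
Qed.

Lemma good_opp y : Good y -> Good (- y).
Proof.
move=> [c [d [D E]]]; exists (- c), d; split => //.
by rewrite toFN -E mulNr.
Qed.

Lemma good_sub y1 y2 : Good y1 -> Good y2 -> Good (y1 - y2).
Proof. by move=> h1 h2; apply: good_add => //; exact: good_opp. Qed.

Lemma good_exp y m : Good y -> Good (y ^+ m).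
Proof.
move=> h; elim: m => [|m IH]; first by rewrite expr0; exact: good1.
by rewrite exprS; exact: good_mul.
Qed.

Lemma good_sum (I : Type) (s : seq I) (F : I -> Fx) :
  (forall i, Good (F i)) -> Good (\sum_(i <- s) F i).
Proof.
move=> h; elim: s => [|a s IH]; first by rewrite big_nil -(tofrac0 Px); exact: good_toF.
by rewrite big_cons; exact: good_add.
Qed.

Lemma good_prod (I : Type) (s : seq I) (F : I -> Fx) :
  (forall i, Good (F i)) -> Good (\prod_(i <- s) F i).
Proof.
move=> h; elim: s => [|a s IH]; first by rewrite big_nil; exact: good1.
by rewrite big_cons; exact: good_mul.
Qed.

Lemma pa_neq0 : pa != 0.
Proof. by rewrite /pa !polyC_eq0 -size_poly_eq0 size_polyX. Qed.

Lemma A_neq0 : A != 0.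
Proof. by rewrite /A toF_eq0 pa_neq0. Qed.

Lemma good_invA : Good (A^-1).
Proof.
exists 1, pa; split; first by exists 1%N, 1; split; [exact: oner_neq0 | rewrite /emb !rmorph1 mulr1 expr1].
by rewrite -/A mulVf ?A_neq0 // toF1.
Qed.

Definition QP (y : Fx) := exists r : {poly rat}, y = toF (emb r).

Lemma good_invQP y : QP y -> y != 0 -> Good (y^-1).
Proof.
move=> [r ->] y0; exists 1, (emb r); split.
  exists 0%N, r; split; last by rewrite expr0 mul1r.
  by apply: contraNneq y0 => ->; rewrite /emb !rmorph0 /= toF_eq0.
by rewrite mulVf // toF1.
Qed.

Lemma QP_mul y1 y2 : QP y1 -> QP y2 -> QP (y1 * y2).
Proof. by move=> [r1 ->] [r2 ->]; exists (r1 * r2); rewrite emb_rmorphM toFM. Qed.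

Lemma QP_sub y1 y2 : QP y1 -> QP y2 -> QP (y1 - y2).
Proof. by move=> [r1 ->] [r2 ->]; exists (r1 - r2); rewrite /emb !rmorphB /= toFB. Qed.

Lemma QP1 : QP 1.
Proof. by exists 1; rewrite /emb !rmorph1 /= toF1. Qed.

Lemma QPQv : QP Qv.
Proof. by exists 'X; rewrite emb_X. Qed.

Lemma QP_exp y m : QP y -> QP (y ^+ m).
Proof.
move=> h; elim: m => [|m IH]; first by rewrite expr0; exact: QP1.
by rewrite exprS; exact: QP_mul.
Qed.

Lemma QP_prod (I : Type) (s : seq I) (F : I -> Fx) :
  (forall i, QP (F i)) -> QP (\prod_(i <- s) F i).
Proof.
move=> h; elim: s => [|a s IH]; first by rewrite big_nil; exact: QP1.
by rewrite big_cons; exact: QP_mul.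
Qed.

Lemma pq_neq0 : pq != 0.
Proof. by rewrite /pq polyC_eq0 -size_poly_eq0 size_polyX. Qed.

Lemma Qv_neq0 : Qv != 0.
Proof. by rewrite /Qv toF_eq0 pq_neq0. Qed.

Lemma good_Qv : Good Qv. Proof. exact: good_toF. Qed.
Lemma good_A : Good A. Proof. exact: good_toF. Qed.
Lemma good_X : Good X. Proof. exact: good_toF. Qed.
Lemma good_invQv : Good (Qv^-1). Proof. exact: good_invQP QPQv Qv_neq0. Qed.

Definition T : Fx := A + A^-1.
Definition T0 (n : nat) : Fx := Qv ^+ n + (Qv ^+ n)^-1.
Definition fac (i : nat) (t : Fx) : Fx := 1 + Qv ^+ (4 * i + 2) - Qv ^+ (2 * i + 1) * t.
Definition phi (k : nat) (t : Fx) : Fx := \prod_(i < k) fac i t.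

Lemma alg1 (F : fieldType) (a u : F) : a != 0 ->
  (1 - a * u) * (1 - u / a) = 1 + u ^+ 2 - u * (a + a^-1).
Proof. by move=> ha; field. Qed.

Lemma qpoch_AQ k : qpoch (A * Qv) (Qv ^+ 2) k * qpoch (Qv / A) (Qv ^+ 2) k = phi k T.
Proof.
rewrite /qpoch /phi -big_split; apply: eq_bigr => i _ /=.
rewrite /fac /T.
have e1 : Qv ^+ (4 * i + 2) = (Qv ^+ (2 * i + 1)) ^+ 2 by rewrite -exprM; congr (_ ^+ _); lia.
have e2 : Qv * (Qv ^+ 2) ^+ i = Qv ^+ (2 * i + 1) by rewrite -exprM -exprS addn1.
rewrite e1 -mulrA e2 mulrAC e2.
exact: alg1 A_neq0.
Qed.

Lemma good_T : Good T.
Proof. by apply: good_add; [exact: good_A | exact: good_invA]. Qed.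

Lemma good_T0 n : Good (T0 n).
Proof.
apply: good_add; first by apply: good_exp; exact: good_Qv.
by rewrite -exprVn; apply: good_exp; exact: good_invQv.
Qed.

Lemma good_fac i t : Good t -> Good (fac i t).
Proof.
move=> h; apply: good_sub; first apply: good_add; first exact: good1.
  by apply: good_exp; exact: good_Qv.
by apply: good_mul => //; apply: good_exp; exact: good_Qv.
Qed.

Lemma good_phi k t : Good t -> Good (phi k t).
Proof. by move=> h; apply: good_prod => i; exact: good_fac. Qed.

Definition Div n (y : Fx) := exists z, Good z /\ y = (T - T0 n) * z.

Lemma div_add n y1 y2 : Div n y1 -> Div n y2 -> Div n (y1 + y2).
Proof.
move=> [z1 [G1 ->]] [z2 [G2 ->]]; exists (z1 + z2); split; first exact: good_add.
by rewrite mulrDr.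
Qed.

Lemma div_mul n y g : Div n y -> Good g -> Div n (y * g).
Proof.
move=> [z [G ->]] Gg; exists (z * g); split; first exact: good_mul.
by rewrite mulrA.
Qed.

Lemma div_sum n (I : Type) (s : seq I) (F : I -> Fx) :
  (forall i, Div n (F i)) -> Div n (\sum_(i <- s) F i).
Proof.
move=> h; elim: s => [|a s IH].
  by rewrite big_nil; exists 0; split; [rewrite -(tofrac0 Px); exact: good_toF | rewrite mulr0].
by rewrite big_cons; exact: div_add.
Qed.

Lemma alg2 (R : comRingType) (P P0 a b t t0 : R) :
  P * (a - b * t) - P0 * (a - b * t0) = (P - P0) * (a - b * t) + (t - t0) * (- b * P0).
Proof. ring. Qed.

Lemma div_phi n k : Div n (phi k T - phi k (T0 n)).
Proof.
elim: k => [|k IH].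
  by rewrite /phi !big_ord0 subrr; exists 0; split; [rewrite -(tofrac0 Px); exact: good_toF | rewrite mulr0].
rewrite /phi !big_ord_recr /= -!/(phi k _).
have -> : phi k T * fac k T - phi k (T0 n) * fac k (T0 n) =
   (phi k T - phi k (T0 n)) * fac k T + (T - T0 n) * (- Qv ^+ (2 * k + 1) * phi k (T0 n)).
  by rewrite /fac alg2.
apply: div_add; first by apply: div_mul => //; apply: good_fac; exact: good_T.
exists (- Qv ^+ (2 * k + 1) * phi k (T0 n)); split => //.
apply: good_mul; last by apply: good_phi; exact: good_T0.
by apply: good_opp; apply: good_exp; exact: good_Qv.
Qed.

Lemma Qv_pow_neq1 m : (0 < m)%N -> Qv ^+ m != 1.
Proof.
move=> m0; rewrite /Qv -toFX -toF1 /toF tofrac_eq /pq -rmorphXn /= -(rmorph1 polyC) /=.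
rewrite (inj_eq polyC_inj); apply/eqP => E.
have := size_polyXn Pa m; rewrite E size_poly1; lia.
Qed.

Lemma qf_neq0 k : qpoch (Qv ^+ 2) (Qv ^+ 2) k != 0.
Proof.
rewrite /qpoch; apply/prodf_neq0 => i _.
by rewrite subr_eq0 eq_sym -exprS -exprM Qv_pow_neq1 // muln_gt0.
Qed.

Lemma QP_qf k : QP (qpoch (Qv ^+ 2) (Qv ^+ 2) k).
Proof.
apply: QP_prod => i; apply: QP_sub; first exact: QP1.
by apply: QP_mul; [|apply: QP_exp]; apply: QP_exp; exact: QPQv.
Qed.

Definition qf (Q : Fx) (m : nat) := qpoch Q Q m.

Lemma qf0 Q : qf Q 0 = 1.
Proof. by rewrite /qf /qpoch big_ord0. Qed.

Lemma qfS Q m : qf Q m.+1 = qf Q m * (1 - Q ^+ m.+1).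
Proof. by rewrite /qf /qpoch big_ord_recr /= exprS. Qed.

Lemma qf_nz Q (hQ1 : forall j, (0 < j)%N -> Q ^+ j != 1) m : qf Q m != 0.
Proof.
rewrite /qf /qpoch; apply/prodf_neq0 => i _.
by rewrite subr_eq0 eq_sym -exprS hQ1.
Qed.

Lemma qb_closed Q N k : (k <= N)%N -> qbinom Q N k = qf Q N / (qf Q k * qf Q (N - k)).
Proof. by rewrite /qbinom => ->. Qed.

Lemma qb_gt Q N k : (N < k)%N -> qbinom Q N k = 0.
Proof. by move=> h; rewrite /qbinom leqNgt h. Qed.

Lemma qb_0 Q (hQ1 : forall j, (0 < j)%N -> Q ^+ j != 1) N : qbinom Q N 0 = 1.
Proof.
rewrite qb_closed // qf0 mul1r subn0 divff //; exact: qf_nz.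
Qed.

Lemma qb_nn Q (hQ1 : forall j, (0 < j)%N -> Q ^+ j != 1) N : qbinom Q N N = 1.
Proof.
rewrite qb_closed // subnn qf0 mulr1 divff //; exact: qf_nz.
Qed.

Lemma alg_pascal (F : fieldType) (fM fj fd x y : F) :
  fM != 0 -> fj != 0 -> fd != 0 -> 1 - x != 0 -> 1 - y != 0 ->
  fM * (1 - x * y) / (fj * (1 - y) * (fd * (1 - x))) =
  fM / (fj * (1 - y) * fd) + x * (fM / (fj * (fd * (1 - x)))).
Proof.
move=> h1 h2 h3 h4 h5; field.
by rewrite ?h1 ?h2 ?h3 ?h4 ?h5.
Qed.

Lemma qb_pascal Q (hQ1 : forall j, (0 < j)%N -> Q ^+ j != 1) M j :
  qbinom Q M.+1 j.+1 = qbinom Q M j.+1 + Q ^+ (M - j) * qbinom Q M j.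
Proof.
have nz := qf_nz _ hQ1.
have [ltjM|] := ltnP j M.
  have [d ->] : exists d, M = (j + d).+1 by exists (M - j.+1)%N; lia.
  rewrite !qb_closed; try lia.
  have -> : ((j + d).+2 - j.+1 = d.+1)%N by lia.
  have -> : ((j + d).+1 - j.+1 = d)%N by lia.
  have -> : ((j + d).+1 - j = d.+1)%N by lia.
  rewrite !qfS.
  have -> : Q ^+ (j + d).+2 = Q ^+ d.+1 * Q ^+ j.+1 by rewrite -exprD; congr (_ ^+ _); lia.
  apply: alg_pascal => //; first by rewrite -qfS nz.
    by rewrite subr_eq0 eq_sym hQ1.
  by rewrite subr_eq0 eq_sym hQ1.
rewrite leq_eqVlt => /orP [/eqP ->|ltMj].
  by rewrite (qb_nn _ hQ1) qb_gt // subnn expr0 mul1r add0r (qb_nn _ hQ1).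
rewrite (qb_gt Q M.+1 j.+1) ?(qb_gt Q M j.+1) ?(qb_gt Q M j) //; last by lia.
by rewrite mulr0 addr0.
Qed.

Definition GP (Q c : Fx) (M : nat) : {poly Fx} := \prod_(i < M) (1 + (c * Q ^+ i)%:P * 'X).

Lemma GP_S Q c M : GP Q c M.+1 = GP Q c M * (1 + (c * Q ^+ M)%:P * 'X).
Proof. by rewrite /GP big_ord_recr. Qed.

Lemma alg_coef (R : comRingType) (a b c q qj qd x : R) :
  a * (c * x) * (q * qj) + c * (qd * qj) * (b * x * q) =
  (a + qd * b) * (c * x) * (q * qj).
Proof. ring. Qed.

Lemma coef_GP Q (hQ1 : forall j, (0 < j)%N -> Q ^+ j != 1) c M j :
  (GP Q c M)`_j = qbinom Q M j * c ^+ j * Q ^+ 'C(j, 2).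
Proof.
elim: M j => [|M IH] j.
  rewrite /GP big_ord0 coef1; case: j => [|j].
    by rewrite (qb_0 _ hQ1) bin0n !expr0 !mulr1.
  by rewrite qb_gt // !mul0r.
rewrite GP_S mulrDr mulr1 coefD mulrCA coefCM coefMX.
case: j => [|j] /=.
  by rewrite mulr0 addr0 IH !(qb_0 _ hQ1).
rewrite !IH (qb_pascal _ hQ1) binS bin1 exprS exprD.
have [lejM|ltMj] := leqP j M.
  have -> : Q ^+ M = Q ^+ (M - j) * Q ^+ j by rewrite -exprD subnK.
  exact: alg_coef.
by rewrite (qb_gt Q M j) // !mul0r mulr0 mulr0 !addr0.
Qed.

Lemma GP_split Q c N l : GP Q c (N + l) = GP Q c N * GP Q (c * Q ^+ N) l.
Proof.
elim: l => [|l IH]; first by rewrite addn0 /GP big_ord0 mulr1.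
by rewrite addnS GP_S GP_S IH -mulrA exprD [c * (_ * _)]mulrA.
Qed.

Lemma qvander Q (hQ1 : forall j, (0 < j)%N -> Q ^+ j != 1) N l :
  qbinom Q (N + l) l * Q ^+ 'C(l, 2) =
  \sum_(j < l.+1) (qbinom Q N j * Q ^+ 'C(j, 2)) *
     (qbinom Q l (l - j) * (Q ^+ N) ^+ (l - j) * Q ^+ 'C(l - j, 2)).
Proof.
have := coef_GP _ hQ1 1 (N + l) l; rewrite GP_split coefM expr1n mulr1 => <-.
apply: eq_bigr => j _; rewrite !(coef_GP _ hQ1) expr1n mulr1 mul1r.
done.
Qed.

Lemma binsq k : (k ^ 2 = 'C(k, 2) * 2 + k)%N.
Proof. elim: k => [|k IH] //. rewrite binS bin1. nia. Qed.

Lemma expz_sub (F : fieldType) (x : F) (a b : nat) : x != 0 ->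
  x ^ ((a%:Z) - (b%:Z)) = x ^+ a / x ^+ b.
Proof. move=> hx. rewrite expfzDr //. rewrite -exprnN. done. Qed.

Lemma alg_cancel (F : fieldType) (a b c : F) : b != 0 -> a * b / (c * b) = a / c.
Proof. move=> hb; rewrite invfM mulrACA divff // mulr1. done. Qed.

Lemma Qz_eq n N k : n = N.*2.+1 ->
  Qv ^ ((k ^ 2)%:Z - (n * k)%:Z) = (Qv ^+ 2) ^+ 'C(k, 2) / (Qv ^+ 2) ^+ (N * k).
Proof.
move=> hn; rewrite expz_sub; last exact: Qv_neq0.
rewrite binsq hn -!exprM exprD.
have -> : ((N.*2.+1) * k = 2 * (N * k) + k)%N by rewrite -mul2n; lia.
rewrite exprD mulnC.
apply: alg_cancel; apply: expf_neq0; exact: Qv_neq0.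
Qed.

Lemma prodB Q (hQ1 : forall j, (0 < j)%N -> Q ^+ j != 1) N l :
  \prod_(i < l) (1 - Q ^+ N.+1 * Q ^+ i) = qf Q (N + l) / qf Q N.
Proof.
elim: l => [|l IH].
  rewrite big_ord0 addn0 divff //; exact: (qf_nz _ hQ1).
rewrite big_ord_recr /= IH addnS qfS -exprD addSn.
by rewrite mulrAC.
Qed.

Lemma alg_prodA (F : fieldType) (s C E u w fN fd : F) :
  E != 0 -> fd != 0 -> 1 - w != 0 -> u != 0 -> w != 0 ->
  s * C / E * (fN / (fd * (1 - w))) * (1 - u / (u * w)) =
  -1 * s * (C * u) / (u * w * E) * (fN / fd).
Proof. move=> h1 h2 h3 h4 h5; field. by rewrite ?h1 ?h2 ?h3 ?h4 ?h5. Qed.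

Lemma prodA Q (hQ0 : Q != 0) (hQ1 : forall j, (0 < j)%N -> Q ^+ j != 1) N l :
  (l <= N)%N ->
  \prod_(i < l) (1 - Q ^+ i / Q ^+ N) =
  (-1) ^+ l * Q ^+ 'C(l, 2) / Q ^+ (N * l) * (qf Q N / qf Q (N - l)).
Proof.
elim: l => [|l IH] hl.
  rewrite big_ord0 bin0n muln0 subn0 !expr0 divff; last exact: (qf_nz _ hQ1).
  by rewrite invr1 !mulr1.
rewrite big_ord_recr /= IH; last by lia.
have [d hd] : exists d, N = (l + d.+1)%N by exists (N - l.+1)%N; lia.
have -> : (N - l = d.+1)%N by lia.
have -> : (N - l.+1 = d)%N by lia.
rewrite qfS binS bin1 exprD mulnS exprD [(-1) ^+ l.+1]exprS.
have -> : Q ^+ N = Q ^+ l * Q ^+ d.+1 by rewrite hd exprD.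
apply: alg_prodA.
- by apply: expf_neq0.
- exact: (qf_nz _ hQ1).
- by rewrite subr_eq0 eq_sym hQ1.
- by apply: expf_neq0.
- by apply: expf_neq0.
Qed.

Lemma prodA0 (Q : Fx) (hQ0 : Q != 0) N l : (N < l)%N ->
  \prod_(i < l) (1 - Q ^+ i / Q ^+ N) = 0.
Proof.
move=> hl; rewrite (bigD1 (Ordinal hl)) //=.
have -> : Q ^+ N / Q ^+ N = 1 by apply: divff; apply: expf_neq0.
by rewrite subrr mul0r.
Qed.

Lemma alg_fac (F : fieldType) (v u w : F) : v != 0 -> w != 0 ->
  1 + v ^+ 2 * u ^+ 2 - v * u * (v * w + (v * w)^-1) = (1 - u / w) * (1 - v ^+ 2 * w * u).
Proof. move=> h1 h2; field. by rewrite ?h1 ?h2. Qed.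

Lemma phiT0 N k : phi k (T0 (N.*2.+1)) =
  \prod_(i < k) ((1 - (Qv ^+ 2) ^+ i / (Qv ^+ 2) ^+ N) * (1 - (Qv ^+ 2) ^+ N.+1 * (Qv ^+ 2) ^+ i)).
Proof.
rewrite /phi; apply: eq_bigr => i _; rewrite /fac /T0.
have e1 : Qv ^+ (4 * i + 2) = Qv ^+ 2 * ((Qv ^+ 2) ^+ i) ^+ 2.
  by rewrite -!exprM -exprD; congr (_ ^+ _); lia.
have e2 : Qv ^+ (2 * i + 1) = Qv * (Qv ^+ 2) ^+ i.
  by rewrite -exprM -exprS; congr (_ ^+ _); lia.
have e3 : Qv ^+ N.*2.+1 = Qv * (Qv ^+ 2) ^+ N.
  by rewrite -exprM -exprS; congr (_ ^+ _); lia.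
have e4 : (Qv ^+ 2) ^+ N.+1 = Qv ^+ 2 * (Qv ^+ 2) ^+ N.
  by rewrite exprS.
rewrite e1 e2 e3 e4; apply: alg_fac; first exact: Qv_neq0.
by apply: expf_neq0; apply: expf_neq0; exact: Qv_neq0.
Qed.

Lemma alg_key (F : fieldType) (fN fk fNk flk fNl fl : F) :
  fk != 0 -> fNk != 0 -> flk != 0 -> fNl != 0 -> fl != 0 ->
  fN / (fk * fNk) * (fNk / (flk * fNl)) = fN / (fl * fNl) * (fl / (flk * fk)).
Proof. move=> h1 h2 h3 h4 h5; field. by rewrite ?h1 ?h2 ?h3 ?h4 ?h5. Qed.

Lemma qb_key Q (hQ1 : forall j, (0 < j)%N -> Q ^+ j != 1) N k l :
  (k <= l)%N -> (l <= N)%N ->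
  qbinom Q N k * qbinom Q (N - k) (l - k) = qbinom Q N l * qbinom Q l (l - k).
Proof.
move=> hkl hlN.
rewrite !qb_closed; try lia.
have -> : (N - k - (l - k) = N - l)%N by lia.
have -> : (l - (l - k) = k)%N by lia.
by apply: alg_key; apply: (qf_nz _ hQ1).
Qed.

Lemma hornerGP Q M x : (GP Q (-1) M).[x] = qpoch x Q M.
Proof.
rewrite /GP horner_prod /qpoch; apply: eq_bigr => i _.
by rewrite hornerD hornerCM hornerX hornerC mulN1r mulNr [Q ^+ i * x]mulrC.
Qed.

Lemma alg_al (F : fieldType) (s C E fN fNl fNpl fl : F) :
  E != 0 -> fN != 0 -> fNl != 0 -> fl != 0 ->
  s * C / E * (fN / fNl) * (fNpl / fN) / fl ^+ 2 =
  s * (fN / (fl * fNl)) / E * (fNpl / (fl * fN) * C).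
Proof. move=> h1 h2 h3 h4; field. by rewrite ?h1 ?h2 ?h3 ?h4. Qed.

Lemma alg_term (F : fieldType) (s1 s2 b1 b2 b3 b4 C1 C2 E1 E2 : F) :
  E1 != 0 -> E2 != 0 -> b2 * b4 = b1 * b3 ->
  s1 * s2 * b1 / (E1 * E2) * (b2 * C1 * (b3 * E2 * C2)) =
  b2 ^+ 2 * (C1 / E1) * s1 * (b4 * s2 * C2).
Proof.
move=> h1 h2 h.
have -> : b2 ^+ 2 * (C1 / E1) * s1 * (b4 * s2 * C2) = (b2 * b4) * (b2 * C1 * s1 * s2 * C2 / E1).
  by ring.
rewrite h; field. by rewrite ?h1 ?h2.
Qed.

Lemma mainB' n N : n = N.*2.+1 ->
  \sum_(k < n) phi k (T0 n) / (qpoch (Qv ^+ 2) (Qv ^+ 2) k) ^+ 2 * X ^+ k =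
  \sum_(k < N.+1) (qbinom (Qv ^+ 2) N k) ^+ 2 * Qv ^ ((k ^ 2)%:Z - (n * k)%:Z)
        * (- X) ^+ k * qpoch X (Qv ^+ 2) (N - k).
Proof.
move=> hn.
set Q := Qv ^+ 2.
have hQ0 : Q != 0 by apply: expf_neq0; exact: Qv_neq0.
have hQ1 : forall j, (0 < j)%N -> Q ^+ j != 1.
  by move=> j hj; rewrite -exprM Qv_pow_neq1 // muln_gt0.
pose a k := phi k (T0 n) / (qpoch Q Q k) ^+ 2.
pose c (k : nat) := qbinom Q N k ^+ 2 * Qv ^ ((k ^ 2)%:Z - (n * k)%:Z) * (-1) ^+ k.
pose PR := \sum_(k < N.+1) c k *: ('X ^+ k * GP Q (-1) (N - k)).
transitivity ((\poly_(k < n) a k).[X]).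
  by rewrite horner_poly; apply: eq_bigr.
transitivity PR.[X]; last first.
  rewrite /PR horner_sum; apply: eq_bigr => k _.
  rewrite hornerZ hornerM hornerXn hornerGP /c [(- X) ^+ _]exprNn.
  by rewrite !mulrA.
apply: (congr1 (fun p => p.[X])).
apply/polyP => l.
have coefR : PR`_l = \sum_(k < N.+1) c k * (if (l < k)%N then 0 else
     qbinom Q (N - k) (l - k) * (-1) ^+ (l - k) * Q ^+ 'C(l - k, 2)).
  rewrite /PR coef_sum; apply: eq_bigr => k _; rewrite coefZ coefXnM.
  by case: ifP => // _; rewrite (coef_GP _ hQ1).
rewrite coef_poly coefR.
have [hlN|hNl] := leqP l N.
  have hln : (l < n)%N by rewrite hn; lia.
  rewrite hln.
  have Ea : a l = (-1) ^+ l * qbinom Q N l / Q ^+ (N * l) * (qbinom Q (N + l) l * Q ^+ 'C(l, 2)).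
    rewrite /a hn phiT0 big_split /= (prodA _ hQ0 hQ1 _ _ hlN) (prodB _ hQ1).
    rewrite (qb_closed Q N l hlN) (qb_closed Q (N + l) l) ?leq_addl // addnK -/(qf Q l).
    apply: alg_al; [by apply: expf_neq0 | exact: (qf_nz _ hQ1) | exact: (qf_nz _ hQ1) | exact: (qf_nz _ hQ1)].
  rewrite Ea (qvander _ hQ1) mulr_sumr.
  have hlN1 : (l.+1 <= N.+1)%N by [].
  rewrite (big_ord_widen N.+1 (fun j : nat => (-1) ^+ l * qbinom Q N l / Q ^+ (N * l) *
     (qbinom Q N j * Q ^+ 'C(j, 2) * (qbinom Q l (l - j) * (Q ^+ N) ^+ (l - j) * Q ^+ 'C(l - j, 2)))) hlN1).
  rewrite big_mkcond; apply: eq_bigr => k _ /=.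
  case: ifP => hk.
    have hkl : (k <= l)%N by [].
    have -> : (l < k)%N = false by lia.
    rewrite /c (Qz_eq n N k hn) -/Q.
    have e1 : (-1) ^+ l = (-1) ^+ k * (-1) ^+ (l - k) :> Fx by rewrite -exprD subnKC.
    have e2 : Q ^+ (N * l) = Q ^+ (N * k) * (Q ^+ N) ^+ (l - k) by rewrite -exprM -exprD -mulnDr subnKC.
    rewrite e1 e2; apply: alg_term; [by apply: expf_neq0 | by apply: expf_neq0; apply: expf_neq0 |].
    exact: (qb_key _ hQ1 N k l hkl hlN).
  have -> : (l < k)%N = true by lia.
  by rewrite mulr0.
rewrite big1; last first.
  move=> k _; case: ifP => _; first by rewrite mulr0.
  have hk := ltn_ord k.
  by rewrite (qb_gt Q (N - k) (l - k)) ?mul0r ?mulr0 //; lia.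
case: ifP => // _.
by rewrite /a hn phiT0 big_split /= (prodA0 _ hQ0 N l hNl) !mul0r.
Qed.

Lemma mainB (n : nat) (hn : (0 < n)%N) (hodd : odd n) :
  \sum_(k < n) phi k (T0 n) / (qpoch (Qv ^+ 2) (Qv ^+ 2) k) ^+ 2 * X ^+ k =
    (\sum_(k < (n.-1)./2.+1)
        (qbinom (Qv ^+ 2) (n.-1)./2 k) ^+ 2
        * Qv ^ ((k ^ 2)%:Z - (n * k)%:Z)
        * (- X) ^+ k * qpoch X (Qv ^+ 2) ((n.-1)./2 - k)).
Proof.
apply: mainB'.
have := odd_double_half n; rewrite hodd; set h := n./2 => E.
have -> : (n.-1 = h.*2)%N by rewrite -E.
by rewrite doubleK -E.
Qed.

Lemma alg3 (F : fieldType) (a v : F) : a != 0 -> v != 0 ->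
  a + a^-1 - (v + v^-1) = - ((1 - a * v) * (a - v)) * (a * v)^-1.
Proof. by move=> ha hv; field; rewrite ha hv. Qed.

Lemma alg4 (R : comRingType) (p b z t : R) : - p * b * z * t = p * (- b * z * t).
Proof. ring. Qed.

Theorem theorem4p1 (n : nat) (hn : (0 < n)%N) (hodd : odd n) :
  congr_mod ((1 - pa * pq ^+ n) * (pa - pq ^+ n))
    (\sum_(k < n)
        qpoch (A * Qv) (Qv ^+ 2) k * qpoch (Qv / A) (Qv ^+ 2) k
        / (qpoch (Qv ^+ 2) (Qv ^+ 2) k) ^+ 2 * X ^+ k)
    (\sum_(k < (n.-1)./2.+1)
        (qbinom (Qv ^+ 2) (n.-1)./2 k) ^+ 2
        * Qv ^ ((k ^ 2)%:Z - (n * k)%:Z)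
        * (- X) ^+ k * qpoch X (Qv ^+ 2) ((n.-1)./2 - k)).
Proof.
rewrite -(mainB n hn hodd).
have -> : \sum_(k < n) qpoch (A * Qv) (Qv ^+ 2) k * qpoch (Qv / A) (Qv ^+ 2) k
        / (qpoch (Qv ^+ 2) (Qv ^+ 2) k) ^+ 2 * X ^+ k =
        \sum_(k < n) phi k T / (qpoch (Qv ^+ 2) (Qv ^+ 2) k) ^+ 2 * X ^+ k.
  by apply: eq_bigr => k _; rewrite qpoch_AQ.
have [z [Gz Ez]] : Div n (\sum_(k < n) phi k T / (qpoch (Qv ^+ 2) (Qv ^+ 2) k) ^+ 2 * X ^+ k
   - \sum_(k < n) phi k (T0 n) / (qpoch (Qv ^+ 2) (Qv ^+ 2) k) ^+ 2 * X ^+ k).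
  rewrite -sumrB; apply: div_sum => k.
  rewrite -mulrBl -mulrBl -mulrA; apply: div_mul; first exact: div_phi.
  apply: good_mul; last by apply: good_exp; exact: good_X.
  apply: good_invQP; first by apply: QP_exp; exact: QP_qf.
  by rewrite expf_neq0 // qf_neq0.
have AQ0 : A * Qv ^+ n != 0.
  apply: mulf_neq0; first exact: A_neq0.
  by apply: expf_neq0; exact: Qv_neq0.
have Gw : Good (- (A * Qv ^+ n)^-1 * z).
  apply: good_mul => //; apply: good_opp.
  rewrite invfM -exprVn; apply: good_mul; first exact: good_invA.
  by apply: good_exp; exact: good_invQv.
have [c [d [[i [r [r0 Ed]]] Ew]]] := Gw.
exists c, d; split; first by rewrite Ed; exact: coprimeD.
have Qn0 : Qv ^+ n != 0 by apply: expf_neq0; exact: Qv_neq0.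
rewrite Ez /T /T0 (alg3 _ _ _ A_neq0 Qn0).
have -> : (1 - A * Qv ^+ n) * (A - Qv ^+ n) = toF ((1 - pa * pq ^+ n) * (pa - pq ^+ n)).
  by rewrite toFM !toFB toF1 toFM toFX.
rewrite -Ew; set P := toF _; set B := A * _.
exact: alg4.
Qed.
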